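(* Let $d\ge1$ and let $P$ be an essential pattern subgroup of $G(d)$. Then $\mathrm{Hdim}(G_P)=\frac{\log_2|P_{d-1}|}{2^{d-1}}$, where $P_{d-1}$ is the level-$(d-1)$ stabilizer of $P$.
   Context: Let $X=\{0,1\}$, $X^*$ the rooted binary tree of finite words, $G=\mathrm{Aut}(X^* )$, $G(d)$ the automorphism group of the finite tree of words of length $\le d$. Sections $g(wv)=g(w)g_w(v)$; $\pi_k$ restriction to words of length $\le k$; $K(n)=\pi_n(K)$; the level-$k$ stabilizer of a group consists of elements fixing all words of length $k$. A subgroup $P\le G(d)$ is an essential pattern group if for every $p\in P$ and $i\in\{0,1\}$ there is $q\in P$ with $\pi_{d-1}(q)=p_i$; $G_P=\{g\in G:\pi_d(g_w)\in P\ \forall w\in X^*\}$. Hausdorff dimension is taken with respect to the profinite metric; for closed $K\le G$, $\mathrm{Hdim}(K)=\liminf_{n\to\infty}\log_2|K(n)|/\log_2|G(n)|$. *)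

(* Defs.v *)
From Stdlib Require Import Reals ClassicalEpsilon.
From HB Require Import structures.
From mathcomp Require Import all_boot all_fingroup.

Set Implicit Arguments.
Unset Strict Implicit.
Unset Printing Implicit Defensive.

(* Words over X = {0,1} are seq bool (false = 0, true = 1). *)

Definition is_tree_aut (g : seq bool -> seq bool) : Prop :=
  bijective g /\
  (forall w, size (g w) = size w) /\
  (forall w v, prefix w v -> prefix (g w) (g v)).

(* section g_w, defined by g(wv) = g(w) g_w(v) *)
Definition sect (g : seq bool -> seq bool) (w : seq bool) : seq bool -> seq bool :=
  fun v => drop (size w) (g (w ++ v)).

Definition agree_upto (k : nat) (f g : seq bool -> seq bool) : Prop :=
  forall v, size v <= k -> f v = g v.

Definition Wd (d : nat) := {n : 'I_d.+1 & n.-tuple bool}.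

Definition wv (d : nat) (x : Wd d) : seq bool := tval (tagged x).

Definition fin_tree_aut (d : nat) (p : {perm Wd d}) : bool :=
  [forall x, size (wv (p x)) == size (wv x)] &&
  [forall x, forall y, prefix (wv x) (wv y) ==> prefix (wv (p x)) (wv (p y))].

Definition Gfin (d : nat) : {set {perm Wd d}} := [set p | fin_tree_aut p].

(* an element of G(d) viewed as a function on words (identity beyond level d) *)
Definition ext (d : nat) (p : {perm Wd d}) : seq bool -> seq bool :=
  fun s => match [pick x : Wd d | wv x == s] with
           | Some x => wv (p x)
           | None => s
           end.

Definition lvl_stab (d k : nat) (P : {set {perm Wd d}}) : {set {perm Wd d}} :=
  [set p in P | [forall x, (size (wv x) == k) ==> (p x == x)]].

Definition essential (d : nat) (P : {group {perm Wd d}}) : Prop :=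
  P \subset Gfin d /\
  forall p, p \in P -> forall i : bool,
    exists2 q, q \in P & agree_upto d.-1 (ext q) (sect (ext p) [:: i]).

Definition GP (d : nat) (P : {set {perm Wd d}}) (g : seq bool -> seq bool) : Prop :=
  is_tree_aut g /\
  forall w, exists2 p, p \in P & agree_upto d (sect g w) (ext p).

Definition pb (A : Prop) : bool :=
  if excluded_middle_informative A then true else false.

Definition proj_set (K : (seq bool -> seq bool) -> Prop) (n : nat)
  : {set {perm Wd n}} :=
  [set p | pb (exists g, K g /\ agree_upto n g (ext p))].

Definition log2 (x : R) : R := Rdiv (ln x) (ln 2).

Definition is_liminf (u : nat -> R) (L : R) : Prop :=
  forall eps : R, Rlt 0 eps ->
    (exists N : nat, forall n : nat, (N <= n)%nat -> Rlt (Rminus L eps) (u n)) /\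
    (forall N : nat, exists n : nat, (N <= n)%nat /\ Rlt (u n) (Rplus L eps)).

Definition Hdim_is (K : (seq bool -> seq bool) -> Prop) (L : R) : Prop :=
  is_liminf (fun n => Rdiv (log2 (INR #|proj_set K n|)) (log2 (INR #|Gfin n|))) L.

(* Main.v *)
Require Import Defs.
From Stdlib Require Import Reals Lra ClassicalEpsilon.
From HB Require Import structures.
From mathcomp Require Import all_boot all_fingroup.
From mathcomp Require Import zify.

Set Implicit Arguments.
Unset Strict Implicit.
Unset Printing Implicit Defensive.


Fixpoint tact (a : seq bool -> bool) (v : seq bool) {struct v} : seq bool :=
  match v with
  | [::] => [::]
  | x :: v' => (x (+) a [::]) :: tact (fun w => a (x :: w)) v'
  end.

Fixpoint tactinv (a : seq bool -> bool) (v : seq bool) {struct v} : seq bool :=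
  match v with
  | [::] => [::]
  | y :: v' => let x := y (+) a [::] in x :: tactinv (fun w => a (x :: w)) v'
  end.

Definition portr (f : seq bool -> seq bool) (w : seq bool) : bool :=
  last false (f (rcons w false)).

Lemma size_tact a v : size (tact a v) = size v.
Proof. by elim: v a => //= x v IH a; rewrite IH. Qed.

Lemma tactK a : cancel (tact a) (tactinv a).
Proof.
move=> v; elim: v a => //= x v IH a.
have -> : x (+) a [::] (+) a [::] = x by case: x; case: (a [::]).
by rewrite IH.
Qed.

Lemma tactinvK a : cancel (tactinv a) (tact a).
Proof.
move=> v; elim: v a => //= x v IH a.
by rewrite IH; case: x; case: (a [::]).
Qed.

Lemma tact_inj a : injective (tact a).
Proof. exact: can_inj (tactK a). Qed.

Lemma tact_cat a w v : tact a (w ++ v) = tact a w ++ tact (fun u => a (w ++ u)) v.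
Proof.
elim: w a => [|x w IH] a /=; first by [].
by rewrite IH.
Qed.

Lemma tact_rcons a w x : tact a (rcons w x) = rcons (tact a w) (x (+) a w).
Proof. by rewrite -cats1 tact_cat /= cats0 cats1. Qed.

Lemma port_act a w : portr (tact a) w = a w.
Proof. by rewrite /portr tact_rcons last_rcons addFb. Qed.

Lemma tact_prefix a w v : prefix w v -> prefix (tact a w) (tact a v).
Proof.
move/prefixP=> [t ->]; rewrite tact_cat; apply/prefixP; by eexists.
Qed.

Lemma tact_tree a : is_tree_aut (tact a).
Proof.
split; first by exists (tactinv a); [exact: tactK | exact: tactinvK].
split; first exact: size_tact.
exact: tact_prefix.
Qed.

Lemma tact_agree n a b :
  (forall w, size w < n -> a w = b w) <-> agree_upto n (tact a) (tact b).
Proof.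
split.
- move=> H v; elim: v n a b H => [|x v IH] n a b H //= Hs.
  case: n H Hs => [|n] H Hs //=.
  have e : a [::] = b [::] by apply: H.
  rewrite e (IH n (fun w => a (x :: w)) (fun w => b (x :: w))) //.
  by move=> w Hw; apply: H.
- move=> H w Hw; rewrite -(port_act a) -(port_act b) /portr H //.
  by rewrite size_rcons.
Qed.

Lemma sect_tact a w : sect (tact a) w =1 tact (fun u => a (w ++ u)).
Proof. by move=> v; rewrite /sect tact_cat drop_size_cat // size_tact. Qed.


Lemma step_lemma (f : seq bool -> seq bool) w :
  size (f w) = size w ->
  (forall x, size (f (rcons w x)) = (size w).+1) ->
  (forall x, prefix (f w) (f (rcons w x))) ->
  f (rcons w true) <> f (rcons w false) ->
  forall x, f (rcons w x) = rcons (f w) (x (+) portr f w).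
Proof.
move=> Hs Hsx Hp Hne.
have ex : forall x, exists b, f (rcons w x) = rcons (f w) b.
  move=> x; move/prefixP: (Hp x) => [t et].
  have st : size t = 1 by move: (Hsx x); rewrite et size_cat Hs => /eqP; rewrite -addn1 eqn_add2l => /eqP.
  case: t et st => [|b [|? ?]] //= et _.
  by exists b; rewrite et cats1.
case: (ex false) => b0 e0; case: (ex true) => b1 e1.
have hp : portr f w = b0 by rewrite /portr e0 last_rcons.
case; rewrite hp ?e0 ?e1 //.
congr rcons; case: b0 b1 e0 e1 hp => [] [] e0 e1 _ //=; exfalso; apply: Hne; by rewrite e0 e1.
Qed.

Lemma good_tact (f : seq bool -> seq bool) n :
  f [::] = [::] ->
  (forall w x, size w < n -> f (rcons w x) = rcons (f w) (x (+) portr f w)) ->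
  forall w, size w <= n -> f w = tact (portr f) w.
Proof.
move=> H0 Hs; elim/last_ind => [|w x IH] //= Hw.
rewrite size_rcons in Hw.
by rewrite Hs // tact_rcons IH // ltnW.
Qed.

Lemma tree_tact g : is_tree_aut g -> forall w, g w = tact (portr g) w.
Proof.
move=> [[h gh hg] [Hs Hp]] w; apply: (@good_tact g (size w)) => //.
- by apply/size0nil; rewrite Hs.
- move=> u x _; apply: step_lemma.
  + exact: Hs.
  + by move=> y; rewrite Hs size_rcons.
  + by move=> y; apply: Hp; apply/prefixP; exists [:: y]; rewrite cats1.
  + by move=> e; move: (congr1 h e); rewrite !gh => /eqP; rewrite eqseq_rcons andbF.
Qed.

Lemma wv_size n (x : Wd n) : size (wv x) <= n.
Proof. case: x => [k t]; rewrite /wv /= size_tuple; by rewrite -ltnS. Qed.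

Lemma wv_inj n : injective (@wv n).
Proof.
move=> [k t] [k' t']; rewrite /wv /= => e.
have ek : k = k' by apply: val_inj; rewrite /= -(size_tuple t) -(size_tuple t') e.
subst k'; have -> : t = t' by apply: val_inj. by [].
Qed.

Definition mkW n (s : seq bool) (H : size s <= n) : Wd n :=
  @Tagged 'I_n.+1 (@Ordinal n.+1 (size s) H) (fun k : 'I_n.+1 => k.-tuple bool)
     (@Tuple (size s) bool s (eqxx _)).

Lemma wv_mkW n s (H : size s <= n) : wv (mkW H) = s.
Proof. by []. Qed.

Lemma ext_wv n (p : {perm Wd n}) x : ext p (wv x) = wv (p x).
Proof.
rewrite /ext; case: pickP => [y /eqP/wv_inj -> //|].
by move=> /(_ x); rewrite eqxx.
Qed.

Lemma ext_mkW n (p : {perm Wd n}) s (H : size s <= n) : ext p s = wv (p (mkW H)).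
Proof. by rewrite -ext_wv. Qed.

Lemma ext_inj n (p q : {perm Wd n}) :
  (forall w, size w <= n -> ext p w = ext q w) -> p = q.
Proof.
move=> H; apply/permP => x; apply: wv_inj; rewrite -!ext_wv H //; exact: wv_size.
Qed.

Lemma Gfin_tact n (p : {perm Wd n}) : p \in Gfin n ->
  forall w, size w <= n -> ext p w = tact (portr (ext p)) w.
Proof.
rewrite inE => /andP [/forallP Hs /forallP Hp].
apply: good_tact.
- have H0 : size (@nil bool) <= n by [].
  by rewrite (ext_mkW p H0); apply/size0nil; rewrite (eqP (Hs _)).
- move=> w x Hw; apply: step_lemma.
  + have H1 : size w <= n by exact: ltnW.
    by rewrite (ext_mkW p H1) (eqP (Hs _)).
  + move=> y; have H2 : size (rcons w y) <= n by rewrite size_rcons.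
    by rewrite (ext_mkW p H2) (eqP (Hs _)) wv_mkW size_rcons.
  + move=> y; have H1 : size w <= n by exact: ltnW.
    have H2 : size (rcons w y) <= n by rewrite size_rcons.
    rewrite (ext_mkW p H1) (ext_mkW p H2).
    move/forallP: (Hp (mkW H1)) => /(_ (mkW H2)) /implyP; apply.
    by rewrite !wv_mkW; apply/prefixP; exists [:: y]; rewrite cats1.
  + have H2 : size (rcons w true) <= n by rewrite size_rcons.
    have H3 : size (rcons w false) <= n by rewrite size_rcons.
    rewrite (ext_mkW p H2) (ext_mkW p H3) => /wv_inj /perm_inj /(congr1 (@wv n)).
    by rewrite !wv_mkW => /eqP; rewrite eqseq_rcons andbF.
Qed.

Lemma mk_size n a (x : Wd n) : size (tact a (wv x)) <= n.
Proof. by rewrite size_tact wv_size. Qed.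

Definition mkf n a (x : Wd n) : Wd n := mkW (mk_size a x).

Lemma mkf_inj n a : injective (@mkf n a).
Proof.
move=> x y /(congr1 (@wv n)); rewrite !wv_mkW => /tact_inj; exact: wv_inj.
Qed.

Definition mkperm n a : {perm Wd n} := perm (@mkf_inj n a).

Lemma ext_mkperm n a w : size w <= n -> ext (mkperm n a) w = tact a w.
Proof. by move=> H; rewrite (ext_mkW _ H) permE wv_mkW. Qed.

Lemma mkperm_Gfin n a : mkperm n a \in Gfin n.
Proof.
rewrite inE; apply/andP; split; apply/forallP => x.
  by rewrite permE wv_mkW size_tact.
apply/forallP => y; apply/implyP; rewrite !permE !wv_mkW; exact: tact_prefix.
Qed.


Fixpoint enc (n : nat) (a : seq bool -> bool) : seq bool :=
  match n with
  | 0 => [::]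
  | n'.+1 => a [::] :: (enc n' (fun w => a (false :: w)) ++ enc n' (fun w => a (true :: w)))
  end.

Lemma size_enc n a : size (enc n a) = 2 ^ n - 1.
Proof.
elim: n a => [|n IH] a //=; rewrite size_cat !IH expnS.
have := expn_gt0 2 n; lia.
Qed.

Lemma enc_eq n a b : enc n a = enc n b <-> (forall w, size w < n -> a w = b w).
Proof.
elim: n a b => [|n IH] a b /=; first by split => // _ [].
split.
- move=> [e0 /eqP]; rewrite eqseq_cat ?size_enc // => /andP [/eqP /IH H0 /eqP /IH H1].
  by case=> [|[] w] //= Hw; [apply: H1|apply: H0].
- move=> H; rewrite H //; congr cons; congr cat; apply/IH => w Hw; exact: H.
Qed.

Definition glue (h : bool) (a0 a1 : seq bool -> bool) (w : seq bool) : bool :=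
  match w with [::] => h | i :: w' => if i then a1 w' else a0 w' end.

Lemma enc_glue n h a0 a1 : enc n.+1 (glue h a0 a1) = h :: (enc n a0 ++ enc n a1).
Proof. by []. Qed.

Lemma enc_surj n y : size y = 2 ^ n - 1 -> exists a, enc n a = y.
Proof.
elim: n y => [|n IH] y /=.
  by move/size0nil ->; exists (fun _ => false).
case: y => [|h y] /=; first by rewrite expnS; have := expn_gt0 2 n; lia.
move=> Hy.
have H0 : size (take (2 ^ n - 1) y) = 2 ^ n - 1 by rewrite size_takel //; move: Hy; rewrite expnS; have := expn_gt0 2 n; lia.
have H1 : size (drop (2 ^ n - 1) y) = 2 ^ n - 1 by rewrite size_drop; move: Hy; rewrite expnS; have := expn_gt0 2 n; lia.
case: (IH _ H0) => a0 e0; case: (IH _ H1) => a1 e1.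
by exists (glue h a0 a1); rewrite /= -/(enc n a0) -/(enc n a1) e0 e1 cat_take_drop.
Qed.

Lemma portr_agree n (f : seq bool -> seq bool) a :
  (forall w, size w <= n -> f w = tact a w) -> forall w, size w < n -> portr f w = a w.
Proof. by move=> H w Hw; rewrite -(port_act a) /portr H // size_rcons. Qed.

Definition rep n (p : {perm Wd n}) a := forall w, size w <= n -> ext p w = tact a w.

Lemma rep_enc n (p : {perm Wd n}) a : rep p a -> enc n (portr (ext p)) = enc n a.
Proof. move=> H; apply/enc_eq; exact: portr_agree. Qed.

Lemma rep_inj n (p q : {perm Wd n}) a b : rep p a -> rep q b -> enc n a = enc n b -> p = q.
Proof.
move=> Ha Hb /enc_eq /tact_agree H; apply: ext_inj => w Hw.
by rewrite Ha // Hb // H.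
Qed.

Lemma card_list (T : finType) (S : {set T}) (f : T -> seq bool) (L : seq (seq bool)) :
  {in S &, injective f} -> uniq L ->
  (forall y, y \in L <-> exists2 x, x \in S & f x = y) -> #|S| = size L.
Proof.
move=> Hi HL Hm; rewrite cardE -(size_map f); apply: perm_size; apply: uniq_perm.
- by rewrite map_inj_in_uniq ?enum_uniq // => x y; rewrite !mem_enum; apply: Hi.
- exact: HL.
- move=> y; apply/idP/idP.
  + by move/mapP => [x]; rewrite mem_enum => Hx ->; apply/Hm; exists x.
  + by move/Hm => [x Hx <-]; apply: map_f; rewrite mem_enum.
Qed.

Lemma card_Gfin n : #|Gfin n| = 2 ^ (2 ^ n - 1).
Proof.
set k := 2 ^ n - 1.
rewrite (@card_list _ _ (fun p => enc n (portr (ext p))) (map val (enum {: k.-tuple bool}))).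
- by rewrite size_map -cardE card_tuple card_bool.
- move=> p q Hp Hq e; exact: (rep_inj (Gfin_tact Hp) (Gfin_tact Hq) e).
- by rewrite map_inj_uniq ?enum_uniq //; exact: val_inj.
- move=> y; split.
  + move/mapP => [t _ ->]; case: (@enc_surj n t); first by rewrite size_tuple.
    move=> a ea; exists (mkperm n a); first exact: mkperm_Gfin.
    rewrite (@rep_enc n _ a) //; last by move=> w Hw; rewrite ext_mkperm.
  + move=> [p _ <-]; apply/mapP.
    have Hs : size (enc n (portr (ext p))) == k by rewrite size_enc.
    exists (Tuple Hs); first by rewrite mem_enum.
    by [].
Qed.


Lemma pbP (A : Prop) : pb A = true <-> A.
Proof. by rewrite /pb; case: excluded_middle_informative. Qed.

Definition ppi e (p : {perm Wd e}) := portr (ext p).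

Definition Aok e (P : {set {perm Wd e.+1}}) (a : seq bool -> bool) :=
  forall w, exists2 p, p \in P & forall u, size u < e.+1 -> a (w ++ u) = ppi p u.

Lemma rep_ppi e (P : {set {perm Wd e.+1}}) p : P \subset Gfin e.+1 -> p \in P -> rep p (ppi p).
Proof. move=> /subsetP H Hp; exact: Gfin_tact (H _ Hp). Qed.

Lemma proj_char e (P : {set {perm Wd e.+1}}) n (p : {perm Wd n}) :
  P \subset Gfin e.+1 ->
  p \in proj_set (GP P) n <-> exists2 a, Aok P a & rep p a.
Proof.
move=> HS; rewrite inE; split.
- move/pbP => [g [[Hg HG] Hag]].
  exists (portr g); last by move=> w Hw; rewrite -Hag // tree_tact.
  move=> w; case: (HG w) => q Hq Hsq; exists q => //.
  have: agree_upto e.+1 (tact (fun u => portr g (w ++ u))) (tact (ppi q)).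
    move=> v Hv; rewrite -sect_tact -(rep_ppi HS Hq) // -Hsq //.
    by rewrite /sect !(tree_tact Hg).
  by move/tact_agree.
- move=> [a Ha Hr]; apply/pbP; exists (tact a); split; last first.
    by move=> v Hv; rewrite Hr.
  split; first exact: tact_tree.
  move=> w; case: (Ha w) => q Hq Hu; exists q => //.
  move=> v Hv; rewrite sect_tact (rep_ppi HS Hq) //.
  by move: v Hv; apply/tact_agree.
Qed.

Lemma card_proj e (P : {set {perm Wd e.+1}}) n (L : seq (seq bool)) :
  P \subset Gfin e.+1 -> uniq L ->
  (forall y, y \in L <-> exists2 a, Aok P a & y = enc n a) ->
  #|proj_set (GP P) n| = size L.
Proof.
move=> HS HL HLc.
apply: (@card_list _ _ (fun p => enc n (portr (ext p)))) => //.
- move=> p q /(proj_char _ HS) [a _ Ha] /(proj_char _ HS) [b _ Hb].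
  rewrite (rep_enc Ha) (rep_enc Hb); exact: rep_inj.
- move=> y; split.
  + move/HLc => [a Ha ->]; exists (mkperm n a).
      by apply/(proj_char _ HS); exists a => // w Hw; rewrite ext_mkperm.
    by apply: rep_enc => w Hw; rewrite ext_mkperm.
  + move=> [p /(proj_char _ HS) [a Ha Hr] <-]; apply/HLc; exists a => //.
    exact: rep_enc.
Qed.

Lemma uniq_flatten_map (T S : eqType) (F : T -> seq S) s :
  uniq s -> (forall x, x \in s -> uniq (F x)) ->
  (forall x y z, x \in s -> y \in s -> z \in F x -> z \in F y -> x = y) ->
  uniq (flatten (map F s)).
Proof.
elim: s => [|x s IH] //= /andP [Hx Hs] HU HD.
rewrite cat_uniq HU ?mem_head //= IH //; last first.
- by move=> a b z Ha Hb; apply: HD; rewrite in_cons ?Ha ?Hb orbT.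
- by move=> y Hy; apply: HU; rewrite in_cons Hy orbT.
rewrite andbT; apply/hasPn => z /flattenP [t /mapP [y Hy ->] Hz]; apply/negP => Hzx.
have exy : x = y by apply: (HD x y z) => //; rewrite in_cons ?eqxx ?Hy ?orbT.
by move: Hx; rewrite exy Hy.
Qed.

Lemma count_card (T : finType) (A : {set T}) (a : pred T) :
  count a (enum A) = #|[set x in A | a x]|.
Proof.
rewrite -size_filter cardE; apply: perm_size; apply: uniq_perm.
- exact: filter_uniq (enum_uniq _).
- exact: enum_uniq.
- by move=> x; rewrite mem_filter !mem_enum inE andbC.
Qed.

Lemma tact_take a w y : size w <= size y -> tact a w = take (size w) (tact a (w ++ drop (size w) y)).
Proof. by move=> _; rewrite tact_cat take_size_cat // size_tact. Qed.

Lemma agree_lvl e (q q0 : {perm Wd e.+1}) : q \in Gfin e.+1 -> q0 \in Gfin e.+1 ->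
  (forall x, size (wv x) = e -> q x = q0 x) <-> enc e (ppi q) = enc e (ppi q0).
Proof.
move=> Hq Hq0; rewrite enc_eq; split.
- move=> H; apply/tact_agree => w Hw.
  have Hy : size (w ++ nseq (e - size w) false) <= e.+1 by rewrite size_cat size_nseq; lia.
  have Hy2 : size (wv (mkW Hy)) = e by rewrite wv_mkW size_cat size_nseq; lia.
  have := congr1 (@wv _) (H _ Hy2); rewrite -!ext_wv wv_mkW.
  rewrite !(Gfin_tact Hq) ?(Gfin_tact Hq0) // !tact_cat => e1.
  have := congr1 (take (size w)) e1; rewrite !take_size_cat ?size_tact //.
- move=> /tact_agree H x Hx; apply: wv_inj.
  by rewrite -!ext_wv !(Gfin_tact Hq) ?(Gfin_tact Hq0) ?Hx ?H ?Hx // ltnW.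
Qed.

Definition cnd e (p : {perm Wd e.+1}) (i : bool) (q : {perm Wd e.+1}) : bool :=
  enc e (ppi q) == enc e (fun u => ppi p (i :: u)).

Lemma coset_count e (P : {group {perm Wd e.+1}}) q0 : P \subset Gfin e.+1 -> q0 \in P ->
  count (fun q => enc e (ppi q) == enc e (ppi q0)) (enum P) = #|lvl_stab e P|.
Proof.
move=> /subsetP HS Hq0; rewrite count_card -(card_rcoset (lvl_stab e P) q0); apply: eq_card => q.
rewrite mem_rcoset !inE groupMr ?groupV //.
case Hq: (q \in P) => //=.
apply/eqP/forallP.
- move=> He; have H := proj2 (agree_lvl (HS _ Hq) (HS _ Hq0)) He; move=> x; apply/implyP => /eqP Hx.
  by rewrite permM H // permK.
- move=> H; apply/(agree_lvl (HS _ Hq) (HS _ Hq0)) => x Hx.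
  move/implyP: (H x); rewrite Hx eqxx permM => /(_ isT) /eqP e1.
  by rewrite -{2}e1 permKV.
Qed.


Lemma ess_next e (P : {group {perm Wd e.+1}}) : essential P ->
  forall p, p \in P -> forall i, exists2 q, q \in P & cnd p i q.
Proof.
move=> [HS HE] p Hp i; case: (HE p Hp i) => q Hq Ha; exists q => //.
apply/eqP/enc_eq/tact_agree => v Hv.
rewrite -(rep_ppi HS Hq) ?Ha //; last by apply: leq_trans Hv _.
by rewrite /sect /= (rep_ppi HS Hp) //= drop0.
Qed.

Definition nx e (P : {set {perm Wd e.+1}}) (p : {perm Wd e.+1}) (i : bool) : {perm Wd e.+1} :=
  odflt p [pick q in P | cnd p i q].

Lemma nx_spec e (P : {group {perm Wd e.+1}}) : essential P ->
  forall p, p \in P -> forall i, nx P p i \in P /\ cnd p i (nx P p i).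
Proof.
move=> HP p Hp i; rewrite /nx; case: pickP => [q /andP [] //|H].
case: (ess_next HP Hp i) => q Hq Hc; move: (H q); by rewrite Hq Hc.
Qed.

Lemma fold_in e (P : {group {perm Wd e.+1}}) : essential P ->
  forall v q, q \in P -> foldl (nx P) q v \in P.
Proof.
move=> HP; elim=> [|x v IH] q Hq //=; apply: IH; exact: (nx_spec HP Hq x).1.
Qed.

Lemma fold_pi e (P : {group {perm Wd e.+1}}) : essential P ->
  forall v u q, q \in P -> size v + size u < e.+1 ->
  ppi (foldl (nx P) q v) u = ppi q (v ++ u).
Proof.
move=> HP; elim=> [|x v IH] u q Hq Hs //=.
case: (nx_spec HP Hq x) => Hn /eqP /enc_eq Hc.
have Hs' : (size v + size u).+1 < e.+1 by move: Hs => /=; rewrite addSn.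
rewrite IH //; last by apply: ltnW.
by rewrite Hc // size_cat.
Qed.

Lemma exists_a e (P : {group {perm Wd e.+1}}) : essential P ->
  forall p, p \in P -> exists2 a, Aok P a & enc e.+1 a = enc e.+1 (ppi p).
Proof.
move=> HP p Hp; exists (fun w => ppi (foldl (nx P) p w) [::]).
- move=> w; exists (foldl (nx P) p w); first exact: fold_in.
  move=> u Hu; rewrite foldl_cat fold_pi ?cats0 ?addn0 //; exact: fold_in.
- apply/enc_eq => u Hu; by rewrite fold_pi ?cats0 ?addn0.
Qed.

Fixpoint V e (P : {set {perm Wd e.+1}}) (m : nat) (p : {perm Wd e.+1}) : seq (seq bool) :=
  match m with
  | 0 => [:: enc e.+1 (ppi p)]
  | m'.+1 => [seq ppi p [::] :: (x ++ y)
             | x <- flatten [seq V P m' q | q <- enum P & cnd p false q],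
               y <- flatten [seq V P m' q | q <- enum P & cnd p true q]]
  end.

Definition Wl e (P : {set {perm Wd e.+1}}) m p i :=
  flatten [seq V P m q | q <- enum P & cnd p i q].

Lemma V_S e (P : {set {perm Wd e.+1}}) m p :
  V P m.+1 p = [seq ppi p [::] :: (x ++ y) | x <- Wl P m p false, y <- Wl P m p true].
Proof. by []. Qed.

Lemma Aok_shift e (P : {set {perm Wd e.+1}}) a i : Aok P a -> Aok P (fun w => a (i :: w)).
Proof. by move=> H w; case: (H (i :: w)) => q Hq Hu; exists q. Qed.

Lemma Aok_root e (P : {set {perm Wd e.+1}}) a : Aok P a ->
  exists2 q, q \in P & enc e.+1 a = enc e.+1 (ppi q).
Proof. by move=> H; case: (H [::]) => q Hq Hu; exists q => //; apply/enc_eq. Qed.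

Lemma enc_le n m a b : m <= n -> enc n a = enc n b -> enc m a = enc m b.
Proof. move=> Hmn /enc_eq H; apply/enc_eq => w Hw; apply: H; exact: leq_trans Hw Hmn. Qed.

Lemma V_char e (P : {group {perm Wd e.+1}}) : essential P ->
  forall m p, p \in P -> forall y,
  y \in V P m p <-> exists a, [/\ Aok P a, enc e.+1 a = enc e.+1 (ppi p) & y = enc (e.+1 + m) a].
Proof.
move=> HP; elim=> [|m IH] p Hp y.
- rewrite inE addn0; split.
  + move/eqP => ->; case: (exists_a HP Hp) => a Ha Hea; exists a; split => //.
  + by move=> [a [_ H1 ->]]; rewrite H1.
- rewrite V_S addnS; split.
  + move/allpairsP => [[x z] [/= /flattenP [s0 /mapP [q0 Hq0 ->] Hx]
                               /flattenP [s1 /mapP [q1 Hq1 ->] Hz] ->]].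
    move: Hq0 Hq1; rewrite !mem_filter => /andP [/eqP /enc_eq Hc0 Hq0] /andP [/eqP /enc_eq Hc1 Hq1].
    move/andP: Hq0 => [Hq0 _]; move/andP: Hq1 => [Hq1 _].
    case/(IH _ Hq0): Hx => a0 [Ha0 He0 ->]; case/(IH _ Hq1): Hz => a1 [Ha1 He1 ->].
    move/enc_eq: He0 => He0; move/enc_eq: He1 => He1.
    have Hg : forall u, size u < e.+1 -> glue (ppi p [::]) a0 a1 u = ppi p u.
      case=> [|[] u] //= Hu.
      * by rewrite He1 // ?Hc1 // ltnW.
      * by rewrite He0 // ?Hc0 // ltnW.
    have E1 : enc e.+1 (glue (ppi p [::]) a0 a1) = enc e.+1 (ppi p) by apply/enc_eq.
    have E2 := enc_glue (e.+1 + m) (ppi p [::]) a0 a1.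
    exists (glue (ppi p [::]) a0 a1); split; [|exact: E1|exact: esym E2].
    case=> [|i w]; first by exists p => // u Hu; rewrite Hg.
    case: i; [case: (Ha1 w) | case: (Ha0 w)] => q Hq Hu; by exists q.
  + move=> [a [Ha He ->]] /=.
    have He' := He; move/enc_eq: He' => He'.
    case: (Aok_root (Aok_shift false Ha)) => q0 Hq0 E0.
    case: (Aok_root (Aok_shift true Ha)) => q1 Hq1 E1.
    apply/allpairsP; exists (enc (e.+1 + m) (fun w => a (false :: w)), enc (e.+1 + m) (fun w => a (true :: w))).
    split => /=; last by rewrite He'.
    * apply/flattenP; exists (V P m q0); first by apply: map_f; rewrite mem_filter mem_enum Hq0 andbT;
        apply/eqP/enc_eq => u Hu; move/enc_eq: E0 => E0; rewrite -E0 ?He' //; apply: ltnW.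
      by apply/(IH _ Hq0); exists (fun w => a (false :: w)); split => //; exact: Aok_shift.
    * apply/flattenP; exists (V P m q1); first by apply: map_f; rewrite mem_filter mem_enum Hq1 andbT;
        apply/eqP/enc_eq => u Hu; move/enc_eq: E1 => E1; rewrite -E1 ?He' //; apply: ltnW.
      by apply/(IH _ Hq1); exists (fun w => a (true :: w)); split => //; exact: Aok_shift.
Qed.


Lemma memEP e (P : {set {perm Wd e.+1}}) q : q \in enum P -> q \in P.
Proof. by rewrite mem_enum. Qed.

Lemma V_disj e (P : {group {perm Wd e.+1}}) : essential P ->
  forall m q q' y, q \in P -> q' \in P -> y \in V P m q -> y \in V P m q' -> q = q'.
Proof.
move=> HP m q q' y Hq Hq' /(V_char HP m Hq) [a [_ Ha ->]] /(V_char HP m Hq') [b [_ Hb E]].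
have HS := HP.1.
apply: (rep_inj (rep_ppi HS Hq) (rep_ppi HS Hq')).
rewrite -Ha -Hb; apply: (enc_le _ E); exact: leq_addr.
Qed.

Lemma V_size_el e (P : {group {perm Wd e.+1}}) : essential P ->
  forall m p y, p \in P -> y \in V P m p -> size y = 2 ^ (e.+1 + m) - 1.
Proof. by move=> HP m p y Hp /(V_char HP m Hp) [a [_ _ ->]]; rewrite size_enc. Qed.

Lemma Wl_mem e (P : {group {perm Wd e.+1}}) m p i z :
  z \in Wl P m p i -> exists2 q, q \in P & z \in V P m q.
Proof.
move/flattenP => [s /mapP [q Hq ->] Hz]; exists q => //.
by move: Hq; rewrite mem_filter mem_enum => /andP [].
Qed.

Lemma Wl_uniq e (P : {group {perm Wd e.+1}}) : essential P ->
  forall m p i, (forall q, q \in P -> uniq (V P m q)) -> uniq (Wl P m p i).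
Proof.
move=> HP m p i HU; apply: uniq_flatten_map.
- exact: filter_uniq (enum_uniq _).
- move=> q; rewrite mem_filter => /andP [_ Hq]; apply: HU; move: Hq; exact: memEP.
- move=> q q' z Hq Hq'.
  move: Hq; rewrite mem_filter => /andP [_ Hq]; have {Hq}Hq := memEP Hq.
  move: Hq'; rewrite mem_filter => /andP [_ Hq']; have {Hq'}Hq' := memEP Hq'.
  exact: V_disj.
Qed.

Lemma V_uniq e (P : {group {perm Wd e.+1}}) : essential P ->
  forall m p, p \in P -> uniq (V P m p).
Proof.
move=> HP; elim=> [|m IH] p Hp //.
rewrite V_S; apply: allpairs_uniq; try exact: Wl_uniq.
move=> [x y] [x' y'] /allpairsP [[x1 y1] [/= Hx Hy [-> ->]]] /allpairsP [[x2 y2] [/= Hx2 Hy2 [-> ->]]] /=.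
case=> /eqP; rewrite eqseq_cat; last first.
  case: (Wl_mem Hx) => q Hq Hxq; case: (Wl_mem Hx2) => q' Hq' Hxq'.
  by rewrite (V_size_el HP Hq Hxq) (V_size_el HP Hq' Hxq').
by move=> /andP [/eqP -> /eqP ->].
Qed.

Lemma size_flatten_const (T : eqType) (S : Type) (F : T -> seq S) s k :
  (forall x, x \in s -> size (F x) = k) -> size (flatten (map F s)) = size s * k.
Proof.
elim: s => [|x s IH] //= H; rewrite size_cat H ?mem_head // IH //.
by move=> y Hy; apply: H; rewrite in_cons Hy orbT.
Qed.


Lemma cnd_count e (P : {group {perm Wd e.+1}}) : essential P ->
  forall p i, p \in P -> count (cnd p i) (enum P) = #|lvl_stab e P|.
Proof.
move=> HP p i Hp; case: (ess_next HP Hp i) => q0 Hq0 /eqP Hc.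
rewrite -(coset_count HP.1 Hq0); apply: eq_count => q.
by rewrite /cnd Hc.
Qed.

Lemma V_size e (P : {group {perm Wd e.+1}}) : essential P ->
  forall m p, p \in P -> size (V P m p) = #|lvl_stab e P| ^ (2 ^ m.+1 - 2).
Proof.
move=> HP; set c := #|lvl_stab e P|; elim=> [|m IH] p Hp //.
have HW : forall i, size (Wl P m p i) = c * c ^ (2 ^ m.+1 - 2).
  move=> i; rewrite /Wl (@size_flatten_const _ _ _ _ (c ^ (2 ^ m.+1 - 2))).
    by rewrite size_filter cnd_count.
  move=> q; rewrite mem_filter => /andP [_ Hq]; apply: IH; exact: memEP.
rewrite V_S size_allpairs !HW -!expnS -expnD; congr (_ ^ _).
rewrite (expnS 2 m.+1); have := expn_gt0 2 m; rewrite expnS; lia.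
Qed.

Definition Lst e (P : {set {perm Wd e.+1}}) m := flatten [seq V P m p | p <- enum P].

Lemma card_projP e (P : {group {perm Wd e.+1}}) : essential P -> forall m,
  #|proj_set (GP P) (e.+1 + m)| = #|P| * #|lvl_stab e P| ^ (2 ^ m.+1 - 2).
Proof.
move=> HP m; rewrite (@card_proj _ _ _ (Lst P m) HP.1).
- rewrite /Lst (@size_flatten_const _ _ _ _ (#|lvl_stab e P| ^ (2 ^ m.+1 - 2))).
    by rewrite -cardE.
  move=> q Hq; apply: V_size => //; exact: memEP.
- apply: uniq_flatten_map; first exact: enum_uniq.
  + move=> q Hq; apply: V_uniq => //; exact: memEP.
  + move=> q q' z Hq Hq'; apply: V_disj => //; exact: memEP.
- move=> y; split.
  + move/flattenP => [s /mapP [q Hq ->]] /(V_char HP m (memEP Hq)) [a [Ha _ ->]].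
    by exists a.
  + move=> [a Ha ->]; case: (Aok_root Ha) => q Hq E.
    apply/flattenP; exists (V P m q); first by apply: map_f; rewrite mem_enum.
    by apply/(V_char HP m Hq); exists a.
Qed.

Local Open Scope R_scope.

Lemma core_bound (lp lc D k K M eps : R) :
  (0 <= lp -> 0 <= lc -> 1 <= D -> 0 <= k -> K + 1 = D * (k + 2) -> M + 1 <= K ->
  lp + 3 * lc < eps * (M + 1) -> 0 < eps -> 0 <= M ->
  lc / D - eps < (lp + k * lc) / K < lc / D + eps).
Proof.
move=> Hlp Hlc HD Hk HK HM Hs He HM0.
have HK0 : (0 < K) by lra.
have eq : ((lp + k * lc) / K = lc / D + (lp - 2 * lc + lc / D) * / K).
  have -> : K = (D * (k + 2) - 1) by lra.
  field; split; nra.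
have HiD : (0 <= lc / D <= lc).
  split; first by apply: Rmult_le_pos => //; apply: Rlt_le; apply: Rinv_0_lt_compat; lra.
  have -> : (lc / D = lc * / D) by [].
  have h1 : (/ D <= 1) by rewrite -Rinv_1; apply: Rinv_le_contravar; lra.
  have h2 : (0 <= / D) by apply: Rlt_le; apply: Rinv_0_lt_compat; lra.
  nra.
have HiK : (0 < / K) by apply: Rinv_0_lt_compat.
have HKiK : (K * / K = 1) by apply: Rinv_r; lra.
have Hb : ((lp + 3 * lc) * / K < eps).
  have : (lp + 3 * lc < eps * K) by nra.
  nra.
rewrite eq; split; nra.
Qed.

Lemma INR2 : INR 2 = 2.
Proof. by rewrite /=; lra. Qed.

Lemma INR_expn m n : INR (m ^ n) = (INR m ^ n).
Proof. elim: n => [|n IH] //; by rewrite expnS -multE mult_INR IH. Qed.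

Lemma ln2_pos : (0 < ln 2).
Proof. have := ln_lt_2; lra. Qed.

Lemma INR_pos a : (0 < a)%N -> (0 < INR a).
Proof. by move=> H; apply: lt_0_INR; apply/ltP. Qed.

Lemma log2_expn2 j : log2 (INR (2 ^ j)) = INR j.
Proof.
rewrite /log2 INR_expn INR2 ln_pow; last lra.
by field; have := ln2_pos; lra.
Qed.

Lemma log2_ge0 a : (0 < a)%N -> (0 <= log2 (INR a)).
Proof.
move=> Ha; rewrite /log2; apply: Rmult_le_pos; last by apply: Rlt_le; apply: Rinv_0_lt_compat; exact: ln2_pos.
case: a Ha => [|[|a]] // _; first by rewrite /= ln_1; lra.
apply: Rlt_le; rewrite -ln_1; apply: ln_increasing; first lra.
have : (1 < INR a.+2) by apply: lt_1_INR; apply/ltP.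
done.
Qed.

Lemma log2_mulpow a b k : (0 < a)%N -> (0 < b)%N ->
  log2 (INR (a * b ^ k)) = (log2 (INR a) + INR k * log2 (INR b)).
Proof.
move=> Ha Hb; rewrite /log2 -multE mult_INR INR_expn ln_mult ?ln_pow; try exact: INR_pos.
  by rewrite /Rdiv; ring.
by apply: pow_lt; exact: INR_pos.
Qed.

Close Scope R_scope.


Theorem mainTheorem12 (d : nat) (P : {group {perm Wd d}}) :
  (1 <= d)%nat ->
  essential P ->
  Hdim_is (GP P)
    (Rdiv (log2 (INR #|lvl_stab d.-1 P|)) (pow 2 d.-1)).
Proof.
Local Open Scope R_scope.
move=> Hd HP.
case: d P Hd HP => [|e] P // _ HP /=.
set c := #|lvl_stab e P|.
have Hc : (0 < c)%N.
  rewrite /c; apply/card_gt0P; exists 1%g; rewrite inE group1 /=.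
  by apply/forallP => x; apply/implyP => _; rewrite perm1.
have Hp : (0 < #|P|)%N := cardG_gt0 P.
set lp := log2 (INR #|P|); set lc := log2 (INR c).
have Hlp : (0 <= lp)%R := log2_ge0 Hp.
have Hlc : (0 <= lc)%R := log2_ge0 Hc.
have hD : (2 ^ e)%R = INR (2 ^ e)%N by rewrite INR_expn INR2.
rewrite hD.
set L := Rdiv lc (INR (2 ^ e)%N).
set u := fun n => Rdiv (log2 (INR #|proj_set (GP P) n|)) (log2 (INR #|Gfin n|)).
have key : forall eps, (0 < eps)%R -> exists N, forall n, (N <= n)%N ->
    (L - eps < u n < L + eps)%R.
  move=> eps He.
  case: (INR_unbounded (Rdiv (lp + 3 * lc) eps)) => N0 HN0.
  exists (e.+1 + N0)%N => n Hn.
  set m := (n - e.+1)%N.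
  have En : n = (e.+1 + m)%N by rewrite /m; lia.
  have Hm : (N0 <= m)%N by rewrite /m; lia.
  rewrite /u En card_projP // card_Gfin log2_mulpow ?expn_gt0 // log2_expn2.
  apply: (core_bound (M := INR m)) => //.
  - have h := le_INR 1 (2 ^ e)%N; rewrite /= in h; apply: h; apply/leP; exact: expn_gt0.
  - exact: pos_INR.
  - have Hnat : ((2 ^ (e.+1 + m) - 1) + 1 = 2 ^ e * ((2 ^ m.+1 - 2) + 2))%N.
      have h1 : (1 <= 2 ^ (e.+1 + m))%N by exact: expn_gt0.
      have h2 : (2 <= 2 ^ m.+1)%N by rewrite expnS; have := expn_gt0 2 m; lia.
      by rewrite !subnK // addSnnS expnD.
    have := congr1 INR Hnat; rewrite -!plusE plus_INR -multE mult_INR plus_INR INR2.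
    by rewrite /=.
  - rewrite -S_INR; apply: le_INR; apply/leP.
    have h1 := @ltn_expl 2 m.+1 isT.
    have h2 : (2 ^ m.+1 <= 2 ^ (e.+1 + m))%N by apply: leq_pexp2l => //; lia.
    lia.
  - have Ht : (Rdiv (lp + 3 * lc) eps * eps = lp + 3 * lc) by field; lra.
    have HNm : (INR N0 <= INR m) by apply: le_INR; apply/leP.
    rewrite -/lp; set t := Rdiv (lp + 3 * lc) eps in Ht HN0.
    have Ht2 : 0 < INR m + 1 - t by lra.
    have := Rmult_lt_0_compat _ _ Ht2 He; lra.
  - exact: pos_INR.
split.
- case: (key eps H) => N HN; exists N => n Hn; move: (HN n Hn); rewrite /L /u /lc /c /=; lra.
- move=> N; case: (key eps H) => N1 HN1; exists (maxn N N1); split.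
    exact: leq_maxl.
  move: (HN1 (maxn N N1) (leq_maxr _ _)); rewrite /L /u /lc /c /=; lra.
Qed.
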